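(* Let $p\in(1,2]$, $\nu\ge2$, and $a_1,\dots,a_\nu\ge0$. Then \[\Big(\sum_{i=1}^\nu a_i\Big)^p-\sum_{i=1}^\nu a_i^p\le\sum_{1\le i<j\le\nu}\big[(a_i+a_j)^p-a_i^p-a_j^p\big].\] *)

(* Defs.v *)
From mathcomp Require Import all_boot all_order all_algebra.
From mathcomp Require Import all_classical all_reals all_analysis.

(* Main.v *)
Require Import Defs.
From mathcomp Require Import all_boot all_order all_algebra.
From mathcomp Require Import all_classical all_reals all_analysis.
From mathcomp Require Import ring lra.
Import Order.TTheory GRing.Theory Num.Theory.
Local Open Scope ring_scope.

Lemma shift_pow (R : realType) (c r u : R) : 0 < c + u ->
  is_derive u 1 (fun v => (c + v) `^ r) (r * (c + u) `^ (r - 1)).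
Proof.
move=> cu.
have dsh : derivable (fun v : R => c + v) u 1.
  by apply: derivableD.
have ip := is_derive1_powR r cu.
have dpow : derivable (@powR R ^~ r) (c + u) 1 by case: ip.
have E : (fun v => (c + v) `^ r) = (@powR R ^~ r) \o (fun v => c + v) by [].
apply: DeriveDef.
  rewrite E; apply/derivable1_diffP; apply: differentiable_comp;
  exact/derivable1_diffP.
rewrite -derive1E E derive1_comp // derive1E derive_val.
rewrite derive1E deriveD // derive_cst derive_id add0r mulr1 //.
Qed.

Lemma powR_decr_neg (R : realType) (d u w : R) : 0 <= d -> 0 < u -> u <= w ->
  w `^ (- d) <= u `^ (- d).
Proof.
move=> d0 u0 uw.
rewrite !powRN lef_pV2 ?posrE ?powR_gt0 ?(lt_le_trans u0 uw) //.
apply: (ge0_ler_powR d0) => //; rewrite nnegrE ltW //; exact: lt_le_trans uw.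
Qed.

Lemma L1 (R : realType) (q x s t : R) : 0 <= q -> q <= 1 -> 0 <= x ->
  0 < s -> s <= t ->
  (x + t) `^ q - t `^ q <= (x + s) `^ q - s `^ q.
Proof.
move=> q0 q1 x0 s0 st.
pose f := (fun v => (x + v) `^ q) - (@powR R ^~ q).
have D : forall w : R, 0 < w -> is_derive w (1 : R) f (q * (x + w) `^ (q - 1) - q * w `^ (q - 1)).
  move=> w w0; apply: is_deriveB; first by apply: shift_pow; rewrite ltr_wpDl.
  exact: is_derive1_powR.
have -> : (x + t) `^ q - t `^ q = f t by [].
have -> : (x + s) `^ q - s `^ q = f s by [].
have s2 : 0 < s / 2 by rewrite divr_gt0.
apply: (@ler0_derive1_nincry R f (s / 2)) => //.
- move=> w; rewrite in_itv/= andbT => sw.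
  by case: (D w (lt_trans s2 sw)).
- move=> w; rewrite in_itv/= andbT => sw.
  have w0 := lt_trans s2 sw.
  rewrite derive1E (@derive_val _ _ _ _ _ _ _ (D w w0)) subr_le0.
  apply: ler_wpM2l => //; rewrite -opprB; apply: powR_decr_neg; rewrite ?subr_ge0 ?lerDr //.
- apply: derivable_within_continuous => w; rewrite in_itv/= andbT => sw.
  by case: (D w (lt_le_trans s2 sw)).
- by rewrite ler_pdivrMr // ler_peMr ?ltW // ltr1n.
Qed.

Lemma L2 (R : realType) (p x y b : R) : 1 <= p -> p <= 2 -> 0 < x -> 0 < y -> 0 <= b ->
  (x + y + b) `^ p - (x + b) `^ p - (y + b) `^ p + b `^ p <=
  (x + y) `^ p - x `^ p - y `^ p.
Proof.
move=> p1 p2 x0 y0 b0.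
have p0 : 0 < p by exact: lt_le_trans p1.
pose g := (fun v => (x + y + v) `^ p) - (fun v => (x + v) `^ p) - (fun v => (y + v) `^ p).
pose f := g + (@powR R ^~ p).
have Dg : forall w : R, 0 <= w -> is_derive w (1 : R) g
   (p * (x + y + w) `^ (p - 1) - p * (x + w) `^ (p - 1) - p * (y + w) `^ (p - 1)).
  move=> w w0; apply: is_deriveB; first apply: is_deriveB; apply: shift_pow.
  - by rewrite ltr_pwDl // addr_gt0.
  - by rewrite ltr_pwDl.
  - by rewrite ltr_pwDl.
have Df : forall w : R, 0 < w -> is_derive w (1 : R) f
   (p * (x + y + w) `^ (p - 1) - p * (x + w) `^ (p - 1) - p * (y + w) `^ (p - 1)
    + p * w `^ (p - 1)).
  move=> w w0; apply: is_deriveD; first exact: Dg (ltW w0).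
  exact: is_derive1_powR.
have -> : (x + y + b) `^ p - (x + b) `^ p - (y + b) `^ p + b `^ p = f b by [].
have -> : (x + y) `^ p - x `^ p - y `^ p = f 0.
  have -> : f 0 = (x+y+0)`^p - (x+0)`^p - (y+0)`^p + 0`^p by [].
  by rewrite powR0 ?gt_eqF // !addr0.
apply: (@ler0_derive1_nincry R f 0) => //.
- move=> w; rewrite in_itv/= andbT => w0.
  by case: (Df w w0).
- move=> w; rewrite in_itv/= andbT => w0.
  rewrite derive1E (@derive_val _ _ _ _ _ _ _ (Df w w0)).
  have H := @L1 R (p - 1) x w (y + w) ltac:(by lra)
    ltac:(by lra) (ltW x0) w0 ltac:(by lra).
  rewrite addrA in H.
  rewrite (_ : _ + _ = p * (((x + y + w) `^ (p - 1) - (y + w) `^ (p - 1)) -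
     ((x + w) `^ (p - 1) - w `^ (p - 1)))); last by ring.
  by rewrite pmulr_rle0 // subr_le0.
- apply/continuous_within_itvcyP; split.
  + move=> w; rewrite in_itv/= andbT => w0.
    apply: differentiable_continuous; apply/derivable1_diffP.
    by case: (Df w w0).
  + have E0 : (0:R) `^ p = 0 by rewrite powR0 ?gt_eqF.
    have -> : f 0 = g 0 + 0 `^ p by [].
    rewrite E0.
    apply: cvgD; last exact: powR_cvg0.
    apply: cvg_at_right_filter.
    apply: differentiable_continuous; apply/derivable1_diffP.
    by case: (Dg 0 (lexx 0)).
Qed.

Lemma subadd (R : realType) (p b x y : R) : 1 <= p -> p <= 2 -> 0 <= b -> 0 <= x -> 0 <= y ->
  (x + y + b) `^ p - (x + y) `^ p - b `^ p <=
  ((x + b) `^ p - x `^ p - b `^ p) + ((y + b) `^ p - y `^ p - b `^ p).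
Proof.
move=> p1 p2 b0 x0 y0.
have E0 : (0:R) `^ p = 0 by rewrite powR0 // gt_eqF // (lt_le_trans ltr01 p1).
have [->|xp] := eqVneq x 0.
  rewrite ?add0r ?addr0 E0 ?subr0; lra.
have [->|yp] := eqVneq y 0.
  rewrite ?add0r ?addr0 E0 ?subr0; lra.
have := @L2 R p x y b p1 p2 ltac:(by rewrite lt_neqAle eq_sym xp) ltac:(by rewrite lt_neqAle eq_sym yp) b0.
move=> H; lra.
Qed.

Lemma sumsub (R : realType) (p b : R) (n : nat) (c : 'I_n -> R) : 1 <= p -> p <= 2 -> 0 <= b ->
  (forall i, 0 <= c i) ->
  (\sum_(i < n) c i + b) `^ p - (\sum_(i < n) c i) `^ p - b `^ p <=
  \sum_(i < n) ((c i + b) `^ p - (c i) `^ p - b `^ p).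
Proof.
move=> p1 p2 b0 c0.
have E0 : (0:R) `^ p = 0 by rewrite powR0 // gt_eqF // (lt_le_trans ltr01 p1).
suff [] : 0 <= \sum_(i < n) c i /\ (\sum_(i < n) c i + b) `^ p - (\sum_(i < n) c i) `^ p - b `^ p <=
  \sum_(i < n) ((c i + b) `^ p - (c i) `^ p - b `^ p) by [].
apply: (big_rec2 (fun u v => 0 <= u /\ (u + b) `^ p - u `^ p - b `^ p <= v)).
  by rewrite add0r E0 subr0 subrr.
move=> i u v _ [u0 H]; split; first by rewrite addr_ge0.
have := @subadd R p b (c i) u p1 p2 b0 (c0 i) u0; lra.
Qed.

Lemma main_gen (R : realType) (p : R) (nu : nat) : 1 <= p -> p <= 2 ->
  forall (a : 'I_nu -> R), (forall i, 0 <= a i) ->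
  (\sum_(i < nu) a i) `^ p - \sum_(i < nu) (a i) `^ p <=
  \sum_(i < nu) \sum_(j < nu | (i < j)%N)
     ((a i + a j) `^ p - (a i) `^ p - (a j) `^ p).
Proof.
move=> p1 p2; elim: nu => [|n IH] a a0.
  by rewrite !big_ord0 powR0 ?subr0 // gt_eqF // (lt_le_trans ltr01 p1).
pose a' := fun i : 'I_n => a (widen_ord (leqnSn n) i).
have a'0 : forall i, 0 <= a' i by move=> i; exact: a0.
have := IH a' a'0 => {}IH.
have := @sumsub R p (a ord_max) n a' p1 p2 (a0 _) a'0 => S.
rewrite !big_ord_recr /=.
rewrite [X in _ <= _ + X]big1; last first.
  by move=> j; rewrite ltnNge -ltnS ltn_ord.
rewrite addr0.
rewrite [X in _ <= X](eq_bigr (fun i : 'I_n => \sum_(j < n | (i < j)%N) ((a' i + a' j) `^ p - a' i `^ p - a' j `^ p)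
   + ((a' i + a ord_max) `^ p - a' i `^ p - a ord_max `^ p))); last first.
  move=> i _; rewrite big_mkcond big_ord_recr /= ltn_ord -big_mkcond /=.
  by [].
rewrite big_split /=.
rewrite -/(a' _).
lra.
Qed.

Theorem lemmaA5 (R : realType) (p : R) (nu : nat) (a : 'I_nu -> R) :
  1 < p -> p <= 2 -> (2 <= nu)%N -> (forall i, 0 <= a i) ->
  (\sum_(i < nu) a i) `^ p - \sum_(i < nu) (a i) `^ p <=
  \sum_(i < nu) \sum_(j < nu | (i < j)%N)
     ((a i + a j) `^ p - (a i) `^ p - (a j) `^ p).
Proof.
move=> p1 p2 _ a0; exact: main_gen (ltW p1) p2 a a0.
Qed.
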